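(* Let $k \geq 3$ and let $G$ be a diregular $(2,k,+3)$-digraph. Then $G$ contains a pair of distinct vertices $u,v$ with exactly one common out-neighbour, i.e. $|N^+(u)\cap N^+(v)|=1$.
   Context: A digraph $G$ is $k$-geodetic if for every ordered pair of (not necessarily distinct) vertices $x,y$ there is at most one directed path from $x$ to $y$ of length at most $k$ (the trivial path of length $0$ counts, so there are no directed cycles of length at most $k$). $M(d,k)=1+d+\dots+d^k$. A $(d,k,+\epsilon)$-digraph is a $k$-geodetic digraph with minimum out-degree $d$ and order $M(d,k)+\epsilon$; it is diregular if every vertex has in-degree and out-degree exactly $d$. $N^+(x)$ denotes the set of out-neighbours of $x$. *)

(* Defs.v *)
From mathcomp Require Import all_boot.
Set Implicit Arguments. Unset Strict Implicit. Unset Printing Implicit Defensive.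

Definition outN (V : finType) (e : rel V) (x : V) : {set V} := [set y | e x y].
Definition inN (V : finType) (e : rel V) (x : V) : {set V} := [set y | e y x].

(* A directed walk of length l from x to y is a sequence p (the vertices after x)
   with path e x p, size p = l and last x p = y.  The trivial path is p = [::].
   k-geodetic: for every ordered pair x,y at most one such walk of length <= k. *)
Definition k_geodetic (V : finType) (e : rel V) (k : nat) : Prop :=
  forall (x y : V) (p q : seq V),
    path e x p -> last x p = y -> size p <= k ->
    path e x q -> last x q = y -> size q <= k -> p = q.

Definition Moore (d k : nat) : nat := \sum_(0 <= i < k.+1) d ^ i.

Definition min_outdeg_is (V : finType) (e : rel V) (d : nat) : Prop :=
  (forall x, d <= #|outN e x|) /\ (exists x, #|outN e x| = d).

Definition dk_eps_digraph (V : finType) (e : rel V) (d k eps : nat) : Prop :=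
  [/\ k_geodetic e k, min_outdeg_is e d & #|V| = Moore d k + eps].

Definition diregular (V : finType) (e : rel V) (d : nat) : Prop :=
  forall x, #|outN e x| = d /\ #|inN e x| = d.

(* Main.v *)
Require Import Defs.
From mathcomp Require Import all_boot zify.
Set Implicit Arguments. Unset Strict Implicit. Unset Printing Implicit Defensive.

Fixpoint reach (V : finType) (e : rel V) (j : nat) (u : V) : {set V} :=
  if j is j'.+1 then u |: \bigcup_(w in outN e u) reach e j' w else [set u].

Lemma reachP (V : finType) (e : rel V) j u y :
  reflect (exists p, [/\ path e u p, last u p = y & size p <= j]) (y \in reach e j u).
Proof.
elim: j u y => [|j IH] u y /=.
- rewrite inE; apply: (iffP eqP) => [->|[p [_ Hl Hs]]]; first by exists [::].
  by case: p Hl Hs => [/= ->|].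
- rewrite in_setU1; apply: (iffP orP).
  + case => [/eqP ->|/bigcupP [w]]; first by exists [::].
    rewrite inE => Huw /IH [p [Hp Hl Hs]]; exists (w :: p); split => //=.
    by rewrite Huw.
  + case => -[|w p] [/= Hp Hl Hs]; first by left; rewrite Hl.
    right; move/andP: Hp => [Huw Hp]; apply/bigcupP; exists w; first by rewrite inE.
    by apply/IH; exists p; split.
Qed.

Lemma cyc (V : finType) (e : rel V) k x p :
  k_geodetic e k -> path e x p -> last x p = x -> size p <= k -> p = [::].
Proof. by move=> Hg Hp Hl Hs; apply: (Hg x x p [::]). Qed.

Lemma P2 (V : finType) (e : rel V) k a b c b' :
  k_geodetic e k -> 2 <= k -> e a b -> e b c -> e a b' -> e b' c -> b != b' -> False.
Proof.
move=> Hg Hk H1 H2 H3 H4 Hb.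
have : [:: b; c] = [:: b'; c] by apply: (Hg a c) => //=; rewrite ?H1 ?H2 ?H3 ?H4.
by case=> Eb; rewrite Eb eqxx in Hb.
Qed.

Lemma P3 (V : finType) (e : rel V) k a b c d b' c' :
  k_geodetic e k -> 3 <= k -> e a b -> e b c -> e c d -> e a b' -> e b' c' -> e c' d ->
  b != b' -> False.
Proof.
move=> Hg Hk H1 H2 H3 H4 H5 H6 Hb.
have : [:: b; c; d] = [:: b'; c'; d] by apply: (Hg a d) => //=; rewrite ?H1 ?H2 ?H3 ?H4 ?H5 ?H6.
by case=> Eb; rewrite Eb eqxx in Hb.
Qed.

Lemma moore2 k : Moore 2 k = 2 ^ k.+1 - 1.
Proof.
rewrite /Moore; elim: k => [|k IH]; first by rewrite big_nat1.
rewrite big_nat_recr //= IH [2 ^ k.+2]expnS.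
have := expn_gt0 2 k.+1; move: (2 ^ k.+1) => x; lia.
Qed.

Lemma card2_ex (V : finType) (A : {set V}) : #|A| = 2 -> exists x y, [/\ x != y, x \in A & y \in A] /\ forall z, z \in A -> z = x \/ z = y.
Proof.
move/eqP/cards2P => [x [y [Hxy ->]]]; exists x, y; split; first by rewrite !inE !eqxx orbT.
by move=> z; rewrite !inE => /orP [] /eqP; auto.
Qed.

Lemma reach_card (V : finType) (e : rel V) k :
  k_geodetic e k -> (forall x, #|outN e x| = 2) ->
  forall j, j <= k -> forall u, #|reach e j u| = 2 ^ j.+1 - 1.
Proof.
move=> Hg Hd; elim => [|j IH] Hj u /=; first by rewrite cards1.
have [w1 [w2 [[Hw Hw1 Hw2] Hall]]] := card2_ex (Hd u).
have e1 : e u w1 by move: Hw1; rewrite inE.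
have e2 : e u w2 by move: Hw2; rewrite inE.
have E : \bigcup_(w in outN e u) reach e j w = reach e j w1 :|: reach e j w2.
  apply/setP => y; rewrite inE; apply/bigcupP/orP.
  - by case=> w /Hall [] ->; auto.
  - by case=> H; [exists w1 | exists w2].
rewrite E cardsU1 cardsU.
have -> : reach e j w1 :&: reach e j w2 = set0.
  apply/setP => y; rewrite !inE; apply/negP => /andP [/reachP [p [Hp Hl Hs]] /reachP [q [Hq Hl' Hs']]].
  have : w1 :: p = w2 :: q.
    apply: (Hg u y) => //=; rewrite ?e1 ?e2 //; lia.
  by case=> Ew; rewrite Ew eqxx in Hw.
have -> : u \notin reach e j w1 :|: reach e j w2.
  rewrite inE; apply/negP => /orP [] /reachP [p [Hp Hl Hs]].
  - by have := cyc (x := u) (p := w1 :: p) Hg; rewrite /= e1 Hp Hl => /(_ isT erefl (leq_ltn_trans Hs Hj)).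
  - by have := cyc (x := u) (p := w2 :: p) Hg; rewrite /= e2 Hp Hl => /(_ isT erefl (leq_ltn_trans Hs Hj)).
rewrite cards0 !IH ?(ltnW Hj) // subn0 [2 ^ j.+2]expnS.
have := expn_gt0 2 j.+1; move: (2 ^ j.+1) => x; lia.
Qed.

Lemma other_elem (V : finType) (A : {set V}) a : #|A| = 2 -> a \in A -> exists b, b \in A /\ b != a.
Proof.
move=> /card2_ex [x [y [[Hxy Hx Hy] Hall]]] /Hall [] ->; first by exists y; rewrite eq_sym.
by exists x.
Qed.

Lemma three_elem (V : finType) (S : {set V}) a b c y : #|S| = 3 -> a \in S -> b \in S -> c \in S ->
  a != b -> a != c -> b != c -> y \in S -> [\/ y = a, y = b | y = c].
Proof.
move=> HS Ha Hb Hc Hab Hac Hbc Hy.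
have Hsub : [set a; b; c] \subset S by apply/subsetP => z; rewrite !inE => /orP [/orP [] |] /eqP ->.
have Hc3 : #|[set a; b; c]| = #|S|.
  by rewrite HS -setUA cardsU1 cards2 !inE (negbTE Hbc) (negbTE Hab) (negbTE Hac).
have : y \in [set a; b; c] by rewrite (subset_cardP Hc3 Hsub).
by rewrite !inE => /orP [/orP [] |] /eqP; [constructor 1|constructor 2|constructor 3].
Qed.

Lemma same_out (V : finType) (e : rel V) u v w :
  (forall x, #|outN e x| = 2) ->
  (forall u v, u != v -> #|outN e u :&: outN e v| != 1) ->
  u != v -> e u w -> e v w -> forall y, e v y = e u y.
Proof.
move=> Hd Hno Huv Hu Hv y.
set I := outN e u :&: outN e v.
have H1 : 0 < #|I| by apply/card_gt0P; exists w; rewrite !inE Hu Hv.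
have H2 : #|I| <= 2 by rewrite -(Hd u); apply: subset_leq_card; apply: subsetIl.
have H3 := Hno u v Huv.
have HI : #|I| = 2 by move: H3; rewrite -/I; lia.
have Eu : I =i outN e u by apply: subset_cardP; [rewrite HI Hd | apply: subsetIl].
have Ev : I =i outN e v by apply: subset_cardP; [rewrite HI Hd | apply: subsetIr].
have : (y \in outN e v) = (y \in outN e u) by rewrite -Eu -Ev.
by rewrite !inE.
Qed.

Lemma twin_out (V : finType) (e : rel V) u :
  diregular e 2 ->
  (forall u v, u != v -> #|outN e u :&: outN e v| != 1) ->
  exists t, t != u /\ forall y, e t y = e u y.
Proof.
move=> Hd Hno.
have [w1 [w2 [[_ Hw1 _] _]]] := card2_ex (Hd u).1.
have Hu : u \in inN e w1 by move: Hw1; rewrite !inE.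
have [t [Ht Htu]] := other_elem (Hd w1).2 Hu.
exists t; split => //.
move: Hw1 Ht; rewrite !inE => Hw1 Ht.
apply: (same_out (fun x => (Hd x).1) Hno _ Hw1 Ht); by rewrite eq_sym.
Qed.

Lemma twin_in (V : finType) (e : rel V) u :
  diregular e 2 ->
  (forall u v, u != v -> #|outN e u :&: outN e v| != 1) ->
  exists s, s != u /\ forall y, e y s = e y u.
Proof.
move=> Hd Hno.
have [p1 [p2 [[_ Hp1 _] _]]] := card2_ex (Hd u).2.
have Hu : u \in outN e p1 by move: Hp1; rewrite !inE.
have [s [Hs Hsu]] := other_elem (Hd p1).1 Hu.
exists s; split => //.
have Hsub : inN e u \subset inN e s.
  apply/subsetP => y; move: Hp1 Hs; rewrite !inE => Hp1 Hs Hy.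
  case: (eqVneq p1 y) => [<- //| Hne].
  by rewrite (same_out (fun x => (Hd x).1) Hno Hne Hp1 Hy).
have E := subset_cardP (etrans (Hd u).2 (esym (Hd s).2)) Hsub.
by move=> y; have := E y; rewrite !inE.
Qed.

Lemma no_full_twin (V : finType) (e : rel V) k x x' :
  k_geodetic e k -> 2 <= k -> diregular e 2 -> x != x' ->
  (forall y, e y x = e y x') -> (forall y, e x y = e x' y) -> False.
Proof.
move=> Hg Hk Hd Hx Hi Ho.
have [p [_ [[_ Hp _] _]]] := card2_ex (Hd x).2.
have [w [_ [[_ Hw _] _]]] := card2_ex (Hd x).1.
move: Hp Hw; rewrite !inE => Hp Hw.
apply: (P2 Hg Hk Hp Hw _ _ Hx); by rewrite -?Hi -?Ho.
Qed.

Lemma out_twin_notreach (V : finType) (e : rel V) k x z :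
  k_geodetic e k -> x != z -> (forall y, e z y = e x y) -> z \notin reach e k x.
Proof.
move=> Hg Hxz Ht; apply/negP => /reachP [[|a p] [/= Hp Hl Hs]].
  by rewrite Hl eqxx in Hxz.
move/andP: Hp => [Ha Hp].
have := cyc (x := z) (p := a :: p) Hg; rewrite /= Ht Ha Hp Hl => /(_ isT erefl Hs).
by [].
Qed.

Lemma in_twin_notreach (V : finType) (e : rel V) k x z :
  k_geodetic e k -> x != z -> (forall y, e y z = e y x) -> z \notin reach e k x.
Proof.
move=> Hg Hxz Ht; apply/negP => /reachP [p [Hp Hl Hs]].
case/lastP: p Hp Hl Hs => [|q a]; first by move=> _ /= Hl; rewrite Hl eqxx in Hxz.
rewrite last_rcons rcons_path => /andP [Hq Ha] Ea; subst a => Hs.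
rewrite Ht in Ha.
have := cyc (x := x) (p := rcons q x) Hg; rewrite rcons_path Hq Ha last_rcons size_rcons.
move=> /(_ isT erefl); rewrite -(size_rcons q z) => /(_ Hs).
by case: q {Hq Ha Hs}.
Qed.

Lemma in_twin_reach (V : finType) (e : rel V) k x z z' :
  (forall y, e y z = e y z') -> z != x -> z \in reach e k x -> z' \in reach e k x.
Proof.
move=> Ht Hzx /reachP [p [Hp Hl Hs]].
case/lastP: p Hp Hl Hs => [|q a]; first by move=> _ /= Hl; rewrite Hl eqxx in Hzx.
rewrite last_rcons rcons_path => /andP [Hq Ha] Ea; subst a => Hs.
rewrite Ht in Ha.
apply/reachP; exists (rcons q z'); split.
- by rewrite rcons_path Hq Ha.
- by rewrite last_rcons.
- by rewrite size_rcons -(size_rcons q z).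
Qed.

Lemma rcons_cons (V : Type) (p : seq V) z : exists a q, rcons p z = a :: q /\ last a q = z /\ size q = size p.
Proof.
case: p => [|a p]; first by exists z, [::].
by exists a, (rcons p z); rewrite last_rcons size_rcons.
Qed.

Lemma lemL (V : finType) (e : rel V) k u w z y1 y2 :
  k_geodetic e k -> (forall x, #|outN e x| = 2) ->
  e u w -> z \notin reach e k w -> y1 != y2 -> e y1 z -> e y2 z ->
  y1 \in reach e k u -> y2 \in reach e k u -> False.
Proof.
move=> Hg Hd Huw Hz Hy H1 H2 /reachP [p1 [Hp1 Hl1 Hs1]] /reachP [p2 [Hp2 Hl2 Hs2]].
have [a1 [q1 [E1 [L1 S1]]]] := rcons_cons p1 z.
have [a2 [q2 [E2 [L2 S2]]]] := rcons_cons p2 z.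
have P1 : path e u (rcons p1 z) by rewrite rcons_path Hp1 Hl1 H1.
have P2' : path e u (rcons p2 z) by rewrite rcons_path Hp2 Hl2 H2.
rewrite E1 /= in P1; rewrite E2 /= in P2'.
move/andP: P1 => [A1 Q1]; move/andP: P2' => [A2 Q2].
have Ha : a1 != a2.
  apply/negP => /eqP Ea; subst a2.
  have Eq : q1 = q2 by apply: (Hg a1 z) => //; rewrite ?S1 ?S2.
  subst q2; rewrite -E2 in E1; case: (rcons_inj E1) => Ep; subst p2.
  by move: Hy; rewrite -Hl1 -Hl2 eqxx.
have [x [y [[_ Hx Hy'] Hall]]] := card2_ex (Hd u).
have Hw : w \in outN e u by rewrite inE.
have Ha1 : a1 \in outN e u by rewrite inE.
have Ha2 : a2 \in outN e u by rewrite inE.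
have : w = a1 \/ w = a2.
  move: Ha; case: (Hall _ Hw) => ->; case: (Hall _ Ha1) => ->; case: (Hall _ Ha2) => ->;
  rewrite ?eqxx //; auto.
case=> Ew; subst w; move/negP: Hz; apply; apply/reachP.
  by exists q1; rewrite S1.
by exists q2; rewrite S2.
Qed.

Theorem theorem2 (V : finType) (e : rel V) (k : nat) :
  3 <= k -> dk_eps_digraph e 2 k 3 -> diregular e 2 ->
  exists u v : V, u != v /\ #|outN e u :&: outN e v| = 1.
Proof.
move=> Hk [Hg _ HV] Hd.
case: (boolP [exists u, exists v, (u != v) && (#|outN e u :&: outN e v| == 1)]).
  by move/existsP => [u /existsP [v /andP [Huv /eqP H]]]; exists u, v.
move=> Hn.
have Hno : forall u v, u != v -> #|outN e u :&: outN e v| != 1.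
  move=> u v Huv; apply/negP => H; apply: (negP Hn); apply/existsP; exists u.
  by apply/existsP; exists v; rewrite Huv H.
exfalso.
have Hk2 : 2 <= k by apply: ltnW.
have Hout : forall x, #|outN e x| = 2 by move=> x; exact: (Hd x).1.
have nout : forall x, exists y, e x y.
  by move=> x; have [y [_ [[_ Hy _] _]]] := card2_ex (Hout x); exists y; move: Hy; rewrite inE.
have nin : forall x, exists y, e y x.
  by move=> x; have [y [_ [[_ Hy _] _]]] := card2_ex (Hd x).2; exists y; move: Hy; rewrite inE.
have : 0 < #|V| by rewrite HV addn3.
case/card_gt0P => u _.
have [w Huw] := nout u.
have [tu [Htu1 Htu]] := twin_out u Hd Hno.
have [su [Hsu1 Hsu]] := twin_in u Hd Hno.
have [stu [Hstu1 Hstu]] := twin_in tu Hd Hno.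
have [tw [Htw1 Htw]] := twin_out w Hd Hno.
set R := reach e k u.
have HC : #|~: R| = 3.
  have := cardsC R; rewrite /R (reach_card Hg Hout (leqnn k)) HV moore2.
  have := expn_gt0 2 k.+1; move: (2 ^ k.+1) => x; lia.
have Ntu : tu \notin R by apply: out_twin_notreach => //; rewrite eq_sym.
have Nsu : su \notin R by apply: in_twin_notreach => //; rewrite eq_sym.
have Hstuu : stu != u.
  apply/negP => /eqP E; subst stu.
  apply: (no_full_twin Hg Hk2 Hd (x := u) (x' := tu)) => //; by rewrite eq_sym.
have Nstu : stu \notin R.
  apply/negP => H; move/negP: Ntu; apply.
  exact: (in_twin_reach Hstu Hstuu H).
have D1 : tu != su.
  apply/negP => /eqP E; subst su.
  by apply: (no_full_twin Hg Hk2 Hd (x := tu) (x' := u)) => // y; rewrite Htu.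
have D2 : tu != stu by rewrite eq_sym.
have D3 : su != stu.
  apply/negP => /eqP E; subst su.
  apply: (no_full_twin Hg Hk2 Hd (x := u) (x' := tu)) => //; first by rewrite eq_sym.
  by move=> y; rewrite -Hstu Hsu.
have Ntw : tw \notin reach e k w by apply: out_twin_notreach => //; rewrite eq_sym.
have [y1 [y2 [[Hy12 Hy1 Hy2] _]]] := card2_ex (Hd tw).2.
move: Hy1 Hy2; rewrite !inE => Hy1 Hy2.
have [y [Hy HyR]] : exists y, e y tw /\ y \in ~: R.
  case: (boolP (y1 \in R)) => H1; last by exists y1; rewrite inE H1.
  case: (boolP (y2 \in R)) => H2; last by exists y2; rewrite inE H2.
  by case: (lemL Hg Hout Huw Ntw Hy12 Hy1 Hy2 H1 H2).
have [c Hwc] := nout w.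
have Htwc : e tw c by rewrite Htw.
have Htw2 : w != tw by rewrite eq_sym.
case: (three_elem HC (a := tu) (b := su) (c := stu) _ _ _ D1 D2 D3 HyR);
  rewrite ?inE //; move=> E; subst y.
- rewrite Htu in Hy.
  exact: (P2 Hg Hk2 Huw Hwc Hy Htwc Htw2).
- have [p Hp] := nin u.
  have Hp' : e p su by rewrite Hsu.
  apply: (P3 Hg Hk Hp Huw Hwc Hp' Hy Htwc); by rewrite eq_sym.
- have [p Hp] := nin tu.
  have Hp' : e p stu by rewrite Hstu.
  have Htuw : e tu w by rewrite Htu.
  apply: (P3 Hg Hk Hp Htuw Hwc Hp' Hy Htwc); by [].
Qed.
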